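(* Let $K$ and $L$ be $n$-element finite sets, $M=K\times L$, and let $u=(u_{kl})_{k\in K,l\in L}$ be a unitary matrix all of whose entries $u_{kl}$ are nonzero. Then the maps $C_u,D_u:F(M)\to\operatorname{End}F(K)$ are unitary isomorphisms of the Hermitian vector spaces $(F(M),\langle\cdot,\cdot\rangle_u)$ and $(\operatorname{End}F(K),\langle\cdot,\cdot\rangle_{HS})$.
   Context: For a finite set $J$, $F(J)$ denotes the space of complex-valued functions on $J$. For $f=(f_{kl})\in F(M)$, $C_uf$ and $D_uf$ are the operators on $F(K)$ whose matrices $(x_{kk'})$ and $(y_{kk'})$ (with respect to the standard basis of delta functions) are $x_{kk'}=\sum_{l\in L}u_{kl}f_{kl}\bar u_{k'l}$ and $y_{kk'}=\sum_{l\in L}u_{kl}f_{k'l}\bar u_{k'l}$. The Hermitian product on $F(M)$ is $\langle f,g\rangle_u=\sum_{k\in K,l\in L}f_{kl}\bar g_{kl}|u_{kl}|^2$, and on $\operatorname{End}F(K)$ the Hilbert–Schmidt product is $\langle X,Y\rangle_{HS}=\operatorname{tr}XY^*=\sum_{k,k'}x_{kk'}\bar y_{kk'}$ where $(x_{kk'}),(y_{kk'})$ are the matrices of $X,Y$. *)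

(* Defs.v *)
From HB Require Import structures.
From mathcomp Require Import all_boot all_order all_algebra.
From mathcomp Require Import complex.
Set Implicit Arguments. Unset Strict Implicit. Unset Printing Implicit Defensive.
Import Order.TTheory GRing.Theory Num.Theory.
Local Open Scope ring_scope.

(* Complex numbers: R[i] for a real closed field R (for R the reals, this is C).
   F(J) := {ffun J -> R[i]};  F(M) = {ffun K * L -> R[i]};
   End F(K) is represented by matrices w.r.t. the delta basis: {ffun K * K -> R[i]}. *)

Section Defs.
Variables (R : rcfType) (K L : finType).
Local Notation C := (R[i]).

Definition unitary_mx (u : {ffun K * L -> C}) : Prop :=
  (forall k k' : K, \sum_(l : L) u (k, l) * (u (k', l))^* = (k == k')%:R) /\
  (forall l l' : L, \sum_(k : K) (u (k, l))^* * u (k, l') = (l == l')%:R).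

Definition Cu (u : {ffun K * L -> C}) (f : {ffun K * L -> C}) : {ffun K * K -> C} :=
  [ffun p : K * K => \sum_(l : L) u (p.1, l) * f (p.1, l) * (u (p.2, l))^*].

Definition Du (u : {ffun K * L -> C}) (f : {ffun K * L -> C}) : {ffun K * K -> C} :=
  [ffun p : K * K => \sum_(l : L) u (p.1, l) * f (p.2, l) * (u (p.2, l))^*].

Definition dot_u (u f g : {ffun K * L -> C}) : C :=
  \sum_(k : K) \sum_(l : L) f (k, l) * (g (k, l))^* * `|u (k, l)| ^+ 2.

(* Hilbert-Schmidt product tr X Y^* *)
Definition dot_HS (X Y : {ffun K * K -> C}) : C :=
  \sum_(k : K) \sum_(k' : K) X (k, k') * (Y (k, k'))^*.

Definition unitary_iso (u : {ffun K * L -> C})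
    (T : {ffun K * L -> C} -> {ffun K * K -> C}) : Prop :=
  linear T /\ bijective T /\ (forall f g, dot_HS (T f) (T g) = dot_u u f g).

End Defs.

(* Main.v *)
Require Import Defs.
From HB Require Import structures.
From mathcomp Require Import all_boot all_order all_algebra.
From mathcomp Require Import complex.
From mathcomp Require Import ring.
Import Order.TTheory GRing.Theory Num.Theory.
Local Open Scope ring_scope.

Lemma sum_delta (C : nzRingType) (T : finType) (F : T -> C) (a : T) :
  \sum_b F b * (a == b)%:R = F a.
Proof.
rewrite (bigD1 a) //= eqxx mulr1 big1 ?addr0 // => b /negbTE.
by rewrite eq_sym => ->; rewrite mulr0.
Qed.

Section P.
Variables (R : rcfType) (K L : finType) (u : {ffun K * L -> R[i]}).
Hypothesis hu : unitary_mx u.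
Hypothesis hnz : forall k l, u (k, l) != 0.

Lemma Cu_iso f g : dot_HS (Cu u f) (Cu u g) = dot_u u f g.
Proof.
rewrite /dot_HS /dot_u. apply eq_bigr => k _.
transitivity (\sum_l \sum_l' \sum_k' (u (k,l) * f (k,l) * (u (k,l'))^* * (g (k,l'))^*)
   * ((u (k',l))^* * u (k',l'))).
  symmetry; under eq_bigr do rewrite exchange_big.
  rewrite exchange_big /=; symmetry; apply: eq_bigr => k' _.
  rewrite !ffunE rmorph_sum mulr_suml; apply: eq_bigr => l _.
  rewrite mulr_sumr; apply: eq_bigr => l' _.
  rewrite !rmorphM /= (conjCK (u (k',l'))). ring.
apply: eq_bigr => l _.
under eq_bigr do rewrite -mulr_sumr.
under eq_bigr do rewrite hu.2.
rewrite sum_delta normCK; ring.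
Qed.

Lemma Du_iso f g : dot_HS (Du u f) (Du u g) = dot_u u f g.
Proof.
rewrite /dot_HS /dot_u exchange_big /=; apply: eq_bigr => k' _.
transitivity (\sum_l \sum_l' \sum_k ((u (k',l))^* * f (k',l) * (u (k',l')) * (g (k',l'))^*)
   * (u (k,l) * (u (k,l'))^*)).
  under [RHS]eq_bigr => l _ do rewrite exchange_big.
  rewrite [RHS]exchange_big /=; apply: eq_bigr => k _.
  rewrite !ffunE rmorph_sum mulr_suml; apply: eq_bigr => l _.
  rewrite mulr_sumr; apply: eq_bigr => l' _.
  rewrite !rmorphM /= (conjCK (u (k',l'))). Show. ring.
apply: eq_bigr => l _.
under eq_bigr do rewrite -mulr_sumr.
have h2 : forall l l', \sum_k u (k, l) * (u (k, l'))^* = (l == l')%:R.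
  move=> a b; have := hu.2 a b; move/(congr1 Num.conj).
  rewrite rmorph_sum rmorph_nat /= => <-; apply: eq_bigr => k _.
  rewrite rmorphM /= conjCK mulrC; reflexivity.
under eq_bigr do rewrite h2.
rewrite sum_delta normCK; ring.
Qed.

Lemma sum_delta' (C : nzRingType) (T : finType) (F : T -> C) (a : T) :
  \sum_b F b * (b == a)%:R = F a.
Proof. by under eq_bigr do rewrite eq_sym; rewrite sum_delta. Qed.

Definition Cinv (X : {ffun K * K -> R[i]}) : {ffun K * L -> R[i]} :=
  [ffun p : K * L => (\sum_k' X (p.1, k') * u (k', p.2)) / u p].
Definition Dinv (X : {ffun K * K -> R[i]}) : {ffun K * L -> R[i]} :=
  [ffun p : K * L => (\sum_k (u (k, p.2))^* * X (k, p.1)) / (u p)^*].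

Lemma Cu_lin : linear (Cu u).
Proof.
move=> a f g; apply/ffunP => p; rewrite !ffunE scaler_sumr -big_split.
apply: eq_bigr => l _; have sc : forall x : R[i], a *: x = a * x by []. rewrite !ffunE /= !sc; ring.
Qed.

Lemma Du_lin : linear (Du u).
Proof.
move=> a f g; apply/ffunP => p; rewrite !ffunE scaler_sumr -big_split.
apply: eq_bigr => l _; have sc : forall x : R[i], a *: x = a * x by []. rewrite !ffunE /= !sc; ring.
Qed.

Lemma Cu_bij : bijective (Cu u).
Proof.
exists Cinv.
- move=> f; apply/ffunP => -[k l]; rewrite !ffunE /=.
  under eq_bigr do rewrite ffunE /= mulr_suml.
  rewrite exchange_big /=.
  under eq_bigr => l' _.
    rewrite (eq_bigr (fun k' => u (k, l') * f (k, l') * ((u (k', l'))^* * u (k', l))));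
      last by move=> k' _; rewrite -!mulrA.
    rewrite -mulr_sumr hu.2.
  over.
  rewrite sum_delta'. rewrite mulrC mulKf //.
- move=> X; apply/ffunP => -[k k']; rewrite !ffunE /=.
  under eq_bigr do rewrite ffunE /= [u (k, _) * _]mulrC divfK // mulr_suml.
  rewrite exchange_big /=.
  under eq_bigr => k'' _.
    rewrite (eq_bigr (fun l => X (k, k'') * (u (k'', l) * (u (k', l))^*)));
      last by move=> l _; rewrite -!mulrA.
    rewrite -mulr_sumr hu.1.
  over.
  by rewrite sum_delta'.
Qed.

Lemma Du_bij : bijective (Du u).
Proof.
have cnz : forall k l, (u (k, l))^* != 0 by move=> k l; rewrite conjC_eq0.
exists Dinv.
- move=> f; apply/ffunP => -[k' l]; rewrite !ffunE /=.
  under eq_bigr do rewrite ffunE /= mulr_sumr.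
  rewrite exchange_big /=.
  under eq_bigr => l' _.
    rewrite (eq_bigr (fun k => f (k', l') * (u (k', l'))^* * ((u (k, l))^* * u (k, l'))));
      last by move=> k _; ring.
    rewrite -mulr_sumr hu.2.
  over.
  by rewrite sum_delta mulfK.
- move=> X; apply/ffunP => -[k k']; rewrite !ffunE /=.
  under eq_bigr do rewrite ffunE /= -mulrA divfK // mulr_sumr.
  rewrite exchange_big /=.
  under eq_bigr => k'' _.
    rewrite (eq_bigr (fun l => X (k'', k') * (u (k, l) * (u (k'', l))^*)));
      last by move=> l _; ring.
    rewrite -mulr_sumr hu.1.
  over.
  by rewrite sum_delta.
Qed.

End P.

Theorem proposition2p1 (R : rcfType) (n : nat) (K L : finType)
    (hK : #|K| = n) (hL : #|L| = n) (u : {ffun K * L -> R[i]})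
    (hu : unitary_mx u) (hnz : forall k l, u (k, l) != 0) :
  unitary_iso u (Cu u) /\ unitary_iso u (Du u).
Proof.
split; split.
- exact: (@Cu_lin R K L u).
- split; [exact: (@Cu_bij R K L u hu hnz) | exact: (@Cu_iso R K L u hu)].
- exact: (@Du_lin R K L u).
- split; [exact: (@Du_bij R K L u hu hnz) | exact: (@Du_iso R K L u hu)].
Qed.
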